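(* For integers $m\ge1$, $n\ge2$ and real $\alpha\notin\pi\mathbb{Z}$, $$\sum_{k=0}^{n-1}\cot^m\frac{\alpha+k\pi}{n}=(-1)^{m/2}\,n\,\mathbb{1}_{m\text{ even}}+\frac{1}{(m-1)!}\sum_{k=1}^m n^kA_m^{(k)}P_{k-1}(\cot\alpha).$$
   Context: The arctangent numbers $A_m^{(k)}$ are defined by $\frac{(\arctan z)^k}{k!}=\sum_{m\ge k}\frac{A_m^{(k)}}{m!}z^m$. The derivative polynomials $P_k$ are defined by $P_0(x)=x$, $P_{k+1}(x)=(1+x^2)P_k'(x)$, equivalently $\frac{d^k}{dz^k}\tan z=P_k(\tan z)$. $\mathbb{1}_{m\text{ even}}$ is $1$ if $m$ is even and $0$ otherwise. *)

(* Defs.v *)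
From HB Require Import structures.
From mathcomp Require Import all_boot all_order all_algebra.
From mathcomp Require Import all_classical all_reals all_analysis.
Set Implicit Arguments. Unset Strict Implicit. Unset Printing Implicit Defensive.
Import Order.TTheory GRing.Theory Num.Theory.
Local Open Scope ring_scope.

Section Defs.
Variable R : realType.

Definition cot (x : R) : R := cos x / sin x.

(* Taylor coefficients of arctan z = sum_j (-1)^j z^(2j+1)/(2j+1) *)
Definition atan_coef (i : nat) : R :=
  if odd i then (-1) ^+ i./2 / i%:R else 0.

Definition atan_trunc (m : nat) : {poly R} := \poly_(i < m.+1) atan_coef i.

(* Arctangent numbers: (arctan z)^k / k! = sum_m A_m^(k) z^m / m!, i.e.
   A_m^(k) = m!/k! * [z^m] (arctan z)^k ; the coefficient of z^m of the
   formal power series (arctan z)^k only depends on the coefficients of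
   arctan z of degree <= m, hence is read off the truncation. *)
Definition arctan_number (m k : nat) : R :=
  (m`!%:R / k`!%:R) * ((atan_trunc m) ^+ k)`_m.

Fixpoint derivP (k : nat) : {poly R} :=
  match k with
  | 0 => 'X
  | k'.+1 => (1 + 'X ^+ 2) * (derivP k')^`()
  end.

End Defs.

(* Main.v *)
Require Import Defs.
From HB Require Import structures.
From mathcomp Require Import all_boot all_order all_algebra.
From mathcomp Require Import all_classical all_reals all_analysis.
From mathcomp Require Import zify ring lra.
Import Order.TTheory GRing.Theory Num.Theory.
Import numFieldNormedType.Exports.
Local Open Scope ring_scope.


Section PartA.
Variable R : realType.
Local Notation T := (atan_trunc R).

Definition low (N : nat) (p q : {poly R}) := forall i, (i < N)%N -> p`_i = q`_i.

Lemma lowM N p q s : low N p q -> low N (p * s) (q * s).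
Proof.
move=> h i hi; rewrite !coefM; apply: eq_bigr => j _; rewrite h //.
have := ltn_ord j; lia.
Qed.

Lemma lowMl N p q s : low N p q -> low N (s * p) (s * q).
Proof. by move=> h i hi; rewrite mulrC [s * q]mulrC; exact: (lowM _ _ _ s h i hi). Qed.

Lemma lowX N p q k : low N p q -> low N (p ^+ k) (q ^+ k).
Proof.
move=> h; elim: k => [|k ih] i hi; first by [].
rewrite !exprS; transitivity ((p * q ^+ k)`_i).
  exact: (lowMl _ _ _ p ih i hi).
exact: (lowM _ _ _ (q ^+ k) h i hi).
Qed.

Lemma low_trunc m N : (m <= N)%N -> low m.+1 (T N) (T m).
Proof.
move=> mN i hi; rewrite /atan_trunc !coef_poly hi.
by have -> : (i < N.+1)%N by lia.
Qed.

Lemma coef_indep m N k : (m <= N)%N -> ((T N) ^+ k)`_m = ((T m) ^+ k)`_m.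
Proof. by move=> mN; exact: (lowX _ _ _ k (low_trunc _ _ mN)). Qed.

Lemma T_X N : T N = 'X * drop_poly 1 (T N).
Proof.
rewrite -{1}(poly_take_drop 1 (T N)) mulrC.
suff -> : take_poly 1 (T N) = 0 by rewrite add0r.
apply/polyP => i; rewrite coef_take_poly coef0.
case: i => [|i] //=; by rewrite /atan_trunc coef_poly /atan_coef /=.
Qed.

Lemma coef_big N m k : (m < k)%N -> ((T N) ^+ k)`_m = 0.
Proof.
move=> mk; rewrite T_X exprMn coefXnM.
by rewrite mk.
Qed.

Lemma coef_k0 N m : (0 < m)%N -> ((T N) ^+ 0)`_m = 0.
Proof. by case: m => // m _; rewrite expr0 coef1. Qed.

Lemma Tder_coef N j : (j < N)%N ->
  (T N)^`()`_j = if odd j then 0 else (-1) ^+ j./2.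
Proof.
move=> jN; rewrite coef_deriv /atan_trunc coef_poly.
have -> : (j.+1 < N.+1)%N by lia.
rewrite /atan_coef /=.
case: (boolP (odd j)) => oj /=; first by rewrite mul0rn.
rewrite -[_ *+ j.+1]mulr_natr divfK ?pnatr_eq0 //.
by rewrite -{1}(even_halfK oj) uphalf_double.
Qed.

Lemma low_DT N : low N ((1 + 'X ^+ 2) * (T N)^`()) 1.
Proof.
move=> i iN; rewrite mulrDl mul1r coefD coefXnM coef1.
rewrite Tder_coef //.
case: i iN => [|[|i]] iN /=; first by rewrite expr0 addr0.
  by rewrite addr0.
have -> : (i.+2 - 2 = i)%N by lia.
rewrite Tder_coef; last by lia.
case: (boolP (odd i)) => oi /=; first by rewrite addr0.
by rewrite exprS mulN1r addNr.
Qed.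

Lemma key N m k : (0 < m)%N -> (m < N)%N -> (0 < k)%N ->
  m.+1%:R * ((T N) ^+ k)`_m.+1 + (m.-1)%:R * ((T N) ^+ k)`_m.-1
  = k%:R * ((T N) ^+ k.-1)`_m.
Proof.
move=> m0 mN k0.
have h : ((1 + 'X ^+ 2) * ((T N) ^+ k)^`())`_m = k%:R * ((T N) ^+ k.-1)`_m.
  rewrite deriv_exp mulrnAr coefMn mulrA (lowM _ _ _ _ (low_DT N) m mN).
  by rewrite mul1r mulr_natl.
rewrite -h mulrDl mul1r coefD coefXnM !coef_deriv.
case: m m0 mN {h} => [|[|m]] //= _ mN.
  by rewrite mul0r !addr0 mulr_natl.
have -> : (m.+2 - 2 = m)%N by lia.
by rewrite !mulr_natl.
Qed.


Definition dd (m k : nat) : R := m%:R * ((T m) ^+ k)`_m / k`!%:R.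

Lemma dd0m k : dd 0 k = 0.
Proof. by rewrite /dd mul0r mul0r. Qed.

Lemma dd_k0 m : dd m 0 = 0.
Proof. by case: m => [|m]; rewrite ?dd0m // /dd coef_k0 // mulr0 mul0r. Qed.

Lemma dd_big m k : (m < k)%N -> dd m k = 0.
Proof. by move=> mk; rewrite /dd coef_big // mulr0 mul0r. Qed.

Lemma dd_rec m k : (0 < m)%N -> (0 < k)%N ->
  dd m.+1 k = - dd m.-1 k + dd m k.-1 / m%:R.
Proof.
move=> m0 k0; have E := key m.+1 m k m0 (ltnSn m) k0.
rewrite /dd -(coef_indep (m.-1) (m.+1) k); last by lia.
rewrite -(coef_indep m (m.+1) k.-1); last by lia.
case: k k0 E => [//|k] _ /= E.
have -> : (m.+1%:R * ((T m.+1) ^+ k.+1)`_m.+1 = k.+1%:R * ((T m.+1) ^+ k)`_m - (m.-1)%:R * ((T m.+1) ^+ k.+1)`_m.-1).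
  by rewrite -E addrK.
rewrite factS natrM.
have k1 : (k.+1%:R : R) != 0 by rewrite pnatr_eq0.
have kf : (k`!%:R : R) != 0 by rewrite pnatr_eq0 -lt0n fact_gt0.
have mr : (m%:R : R) != 0 by rewrite pnatr_eq0 -lt0n.
field.
have k2 : (1 + k%:R : R) != 0 by rewrite addrC natr1 pnatr_eq0.
by rewrite mr kf k2.
Qed.

Variable n : nat.

Definition cstG (m : nat) : R := if ~~ odd m then (-1) ^+ m./2 * n%:R else 0.

Definition G (m : nat) : {poly R} :=
  (cstG m)%:P + \sum_(0 <= k < m.+1) (n%:R ^+ k * dd m k) *: derivP R k.-1.

Lemma G_ext m K : (m < K)%N ->
  G m = (cstG m)%:P + \sum_(0 <= k < K) (n%:R ^+ k * dd m k) *: derivP R k.-1.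
Proof.
move=> mK; rewrite /G (@big_cat_nat _ _ _ m.+1 0 K) //=.
have -> : \sum_(m.+1 <= k < K) (n%:R ^+ k * dd m k) *: derivP R k.-1 = 0.
  rewrite big_nat_cond big1 // => k /andP[/andP[hk _] _].
  by rewrite dd_big // mulr0 scale0r.
by rewrite addr0.
Qed.

Lemma cst_rec m : cstG m.+2 = - cstG m.
Proof.
rewrite /cstG /=; rewrite negbK.
by case: (odd m) => /=; rewrite ?oppr0 // exprS mulN1r mulNr.
Qed.

Lemma G_rec m : (0 < m)%N ->
  G m.+1 = - G m.-1 + (n%:R / m%:R) *: ((1 + 'X ^+ 2) * (G m)^`()).
Proof.
move=> m0.
rewrite (G_ext m.+1 m.+3) // (G_ext m.-1 m.+3); last by lia.
rewrite /G derivD derivC add0r raddf_sum /= mulr_sumr scaler_sumr.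
have -> : \sum_(0 <= i < m.+1) (n%:R / m%:R) *: ((1 + 'X ^+ 2) * ((n%:R ^+ i * dd m i) *: derivP R i.-1)^`())
  = \sum_(0 <= i < m.+3) (if i is i'.+1 then n%:R / m%:R * (n%:R ^+ i' * dd m i') else 0) *: derivP R i.-1.
  rewrite [RHS]big_nat_recl // scale0r add0r.
  rewrite [RHS](@big_cat_nat _ _ _ m.+1 0 m.+2) //=.
  rewrite [X in _ = _ + X]big_nat1 dd_big // mulr0 mulr0 scale0r addr0.
  apply: eq_bigr => i _.
  rewrite derivZ -scalerAr scalerA /=.
  case: i => [|i]; first by rewrite dd_k0 !mulr0 !scale0r.
  by [].
have mm : m.-1.+2 = m.+1 by lia.
rewrite -{1}mm cst_rec polyCN opprD -addrA; congr (_ + _).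
rewrite -sumrN -big_split /=.
apply: eq_bigr => i _.
rewrite -scaleNr -scalerDl; congr (_ *: _).
case: i => [|k]; first by rewrite !dd_k0 !mulr0 oppr0 addr0.
rewrite dd_rec //= exprS; field.
by rewrite pnatr_eq0 -lt0n.
Qed.

End PartA.


Section PartB.
Variable R : realType.

Lemma sin_addnpi (x : R) k : sin (x + k%:R * pi) = (-1) ^+ k * sin x.
Proof.
elim: k => [|k ih]; first by rewrite mul0r addr0 expr0 mul1r.
by rewrite -natr1 mulrDl mul1r addrA sinDpi ih exprS mulN1r mulNr.
Qed.

Lemma sin_npi k : sin (k%:R * pi) = 0 :> R.
Proof. by rewrite -[_ * pi]add0r sin_addnpi sin0 mulr0. Qed.

Lemma sin_mul0 (t : R) j : sin t = 0 -> sin (j%:R * t) = 0.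
Proof.
move=> h; elim: j => [|j ih]; first by rewrite mul0r sin0.
by rewrite -natr1 mulrDl mul1r sinD ih h !(mul0r, mulr0) addr0.
Qed.

Fixpoint UV (j : nat) : {poly R} * {poly R} :=
  match j with
  | 0 => (1, 0)
  | j.+1 => ('X * (UV j).1 - (UV j).2, 'X * (UV j).2 + (UV j).1)
  end.

Lemma UV_trig (t : R) j : sin t != 0 ->
  cos (j%:R * t) = sin t ^+ j * (UV j).1.[cot t] /\
  sin (j%:R * t) = sin t ^+ j * (UV j).2.[cot t].
Proof.
move=> st; elim: j => [|j [ihc ihs]].
  by rewrite mul0r cos0 sin0 /= !hornerE.
rewrite -natr1 mulrDl mul1r cosD sinD ihc ihs /= !hornerE /cot exprS.
set P := sin t ^+ j; set a := (UV j).1.[_]; set b := (UV j).2.[_].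
by split; field.
Qed.

Lemma UV_coef j :
  [/\ (forall i, (j < i)%N -> (UV j).1`_i = 0), (UV j).1`_j = 1,
      (0 < j)%N -> (UV j).1`_j.-1 = 0,
      (forall i, (j <= i)%N -> (UV j).2`_i = 0) &
      (0 < j)%N -> (UV j).2`_j.-1 = j%:R].
Proof.
elim: j => [|j [h1 h2 h3 h4 h5]].
  split => //=.
  - by case=> [|i] // _; rewrite coef1.
  - by rewrite coef1.
  - by move=> i _; rewrite coef0.
split => /=.
- move=> i hi; rewrite coefB coefXM.
  case: i hi => [//|i] hi /=; rewrite h1 ?h4 ?subr0 //; lia.
- rewrite coefB coefXM /= h2 h4 ?subr0 //.
- move=> _; rewrite coefB coefXM.
  case: j {h1 h2 h5} h3 h4 => [|j] h3 h4 /=; first by rewrite ?coef0 ?coef1 ?subrr.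
  by rewrite h3 // h4 // subr0.
- move=> i hi; rewrite coefD coefXM.
  case: i hi => [//|i] hi /=; rewrite h4 ?h1 ?addr0 //; lia.
- move=> _; rewrite coefD coefXM.
  case: j {h1 h3 h4} h2 h5 => [|j] h2 h5 /=; first by rewrite ?coef0 ?coef1 ?addr0 ?add0r.
  by rewrite h5 // h2 natr1.
Qed.


Definition th (n : nat) (a : R) (k : nat) : R := (a + k%:R * pi) / n%:R.

Lemma nth_th n a k : (0 < n)%N -> n%:R * th n a k = a + k%:R * pi.
Proof. by move=> n0; rewrite /th mulrC divfK // pnatr_eq0 -lt0n. Qed.

Lemma sin_th_neq0 n a k : (0 < n)%N -> sin a != 0 -> sin (th n a k) != 0.
Proof.
move=> n0 sa; apply/eqP => /(sin_mul0 _ n).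
rewrite nth_th // sin_addnpi => /eqP; rewrite mulf_eq0 signr_eq0 /=.
by apply/negP.
Qed.

Lemma cot_th_inj n a j k : (0 < n)%N -> sin a != 0 -> (j < k < n)%N ->
  cot (th n a j) != cot (th n a k).
Proof.
move=> n0 sa /andP[jk kn].
have sj := sin_th_neq0 n a j n0 sa; have sk := sin_th_neq0 n a k n0 sa.
apply/eqP => /eqP; rewrite /cot eqr_div // mulrC => /eqP E.
have : sin (th n a k - th n a j) = 0.
  by rewrite sinB E subrr.
have -> : th n a k - th n a j = (k - j)%N%:R / n%:R * pi.
  rewrite /th natrB; last by lia.
  by field; rewrite pnatr_eq0 -lt0n.
apply/eqP; rewrite gt_eqF // sin_gt0_pi //.
have nr : (0 : R) < n%:R by rewrite ltr0n.
apply/andP; split.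
  by rewrite mulr_gt0 ?pi_gt0 // divr_gt0 // ltr0n; lia.
rewrite gtr_pMl ?pi_gt0 // ltr_pdivrMr // mul1r ltr_nat; lia.
Qed.


Lemma sum_cot n a : (0 < n)%N -> sin a != 0 ->
  \sum_(k < n) cot (th n a k) = n%:R * cot a.
Proof.
move=> n0 sa.
have [h1 h2 h3 h4 h5] := UV_coef n.
set U := (UV n).1 in h1 h2 h3; set V := (UV n).2 in h4 h5.
pose Q := sin a *: U - cos a *: V.
have Qn : Q`_n = sin a by rewrite coefB !coefZ h2 h4 // mulr0 subr0 mulr1.
have Qn1 : Q`_n.-1 = - (cos a * n%:R) by rewrite coefB !coefZ h3 // h5 // mulr0 sub0r.
have Qsize : size Q = n.+1.
  apply/eqP; rewrite eqn_leq; apply/andP; split.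
    apply/leq_sizeP => i hi; rewrite coefB !coefZ h1 ?h4 ?mulr0 ?subr0 //; lia.
  rewrite ltnNge; apply/negP => hs.
  by move: sa; rewrite -Qn nth_default // eqxx.
pose rs := [seq cot (th n a k) | k <- iota 0 n].
have srs : size rs = n by rewrite size_map size_iota.
have roots : all (root Q) rs.
  rewrite all_map; apply/allP => k _ /=; rewrite /root.
  have st := sin_th_neq0 n a k n0 sa.
  have [ec es] := UV_trig _ n st.
  have : sin (th n a k) ^+ n * Q.[cot (th n a k)] = 0.
    rewrite /Q !hornerE mulrBr !mulrA ![_ * sin a]mulrC ![_ * cos a]mulrC.
    rewrite -!mulrA -ec -es -sinB nth_th // opprD addrA subrr add0r sinN.
    by rewrite sin_npi oppr0.
  by move/eqP; rewrite mulf_eq0 expf_eq0 (negbTE st) andbF.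
have urs : uniq_roots rs.
  rewrite uniq_rootsE map_inj_in_uniq ?iota_uniq // => j k.
  rewrite !mem_iota !add0n => /andP[_ jn] /andP[_ kn] E.
  case: (ltngtP j k) => // h.
    have hjk : (j < k < n)%N by lia.
    by have := cot_th_inj n a j k n0 sa hjk; rewrite E eqxx.
  have hjk : (k < j < n)%N by lia.
  by have := cot_th_inj n a k j n0 sa hjk; rewrite E eqxx.
have QP := all_roots_prod_XsubC (etrans Qsize (congr1 S (esym srs))) roots urs.
have := congr1 (fun p : {poly R} => p`_n.-1) QP => /=.
rewrite coefZ -{2}srs coefPn_prod_XsubC ?srs -?lt0n // Qn1 lead_coefE Qsize /= Qn.
rewrite big_map.
have -> : \sum_(j <- iota 0 n) cot (th n a j) = \sum_(k < n) cot (th n a k).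
  by rewrite -(big_mkord xpredT (fun k => cot (th n a k))) /index_iota subn0.
move=> E; apply: (mulfI sa); rewrite mulrN in E.
by apply: oppr_inj; rewrite -E /cot; field.
Qed.
End PartB.


Section PartC.
Variable R : realType.
Lemma is_derive_cot (x : R) : sin x != 0 ->
  is_derive x 1 (@cot R) (- (1 + cot x ^+ 2)).
Proof.
move=> sx.
have H1 := is_deriveV sx (is_derive_sin x).
have H2 := is_deriveM (is_derive_cos x) H1.
have H3 : is_derive x 1 (@cot R)
    (cos x *: (- sin x ^- 2 *: cos x) + (sin x)^-1 *: - sin x).
  have -> : @cot R = (@cos R) * (fun y => (sin y)^-1).
    by apply/funext => y; rewrite /cot.
  exact: H2.
apply: is_derive_eq H3 _.
rewrite /cot /GRing.scale /=.
by field.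
Qed.


Lemma is_derive_th n k (x : R) : (0 < n)%N ->
  is_derive x 1 (fun a => th R n a k) (n%:R^-1).
Proof.
move=> n0; rewrite /th.
apply: trigger_derive.
by rewrite /GRing.scale /= mulr0 add0r addr0 mulr1.
Qed.

Definition Ssum n m (a : R) := \sum_(k < n) cot (th R n a k) ^+ m.

Lemma is_derive_S n m (x : R) : (0 < n)%N -> (0 < m)%N -> sin x != 0 ->
  is_derive x 1 (Ssum n m) (- (m%:R / n%:R) * (Ssum n m.-1 x + Ssum n m.+1 x)).
Proof.
move=> n0 m0 sx.
have -> : Ssum n m = \sum_(k < n) ((@cot R) \o (fun a => th R n a k)) ^+ m.
  by apply/funext => a; rewrite /Ssum fct_sumE; apply: eq_bigr => k _; rewrite exprfctE.
apply: is_derive_eq.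
  apply: is_derive_sum => k.
  apply: is_deriveX.
  apply: is_derive1_comp.
  apply: is_derive_cot.
  exact: sin_th_neq0.
rewrite /Ssum -big_split /= mulr_sumr; apply: eq_bigr => k _.
rewrite /GRing.scale /= mulr0 add0r addr0 mulr1.
case: m m0 => [//|m] _ /=.
rewrite !exprS; field.
by rewrite pnatr_eq0 -lt0n.
Qed.

End PartC.


Section PartD.
Variable R : realType.

Lemma is_derive_Gcot (p : {poly R}) (x : R) : sin x != 0 ->
  is_derive x 1 (fun a => p.[cot a]) (p^`().[cot x] * - (1 + cot x ^+ 2)).
Proof.
move=> sx.
have -> : (fun a => p.[cot a]) = (horner p) \o (@cot R) by [].
apply: is_derive1_comp; last exact: is_derive_cot.

Qed.

Lemma near_sin (x : R) : sin x != 0 -> \forall y \near x, sin y != 0.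
Proof. move=> sx; exact: (cvgr_neq0 (sin x) (@continuous_sin R x) sx). Qed.

Lemma main_ind n : (0 < n)%N -> forall m,
  (forall a : R, sin a != 0 -> Ssum R n m a = (G R n m).[cot a]) /\
  (forall a : R, sin a != 0 -> Ssum R n m.+1 a = (G R n m.+1).[cot a]).
Proof.
move=> n0; elim=> [|m [IH1 IH2]].
  split => a sa.
    rewrite /Ssum /G big_nat1 dd0m mulr0 scale0r addr0 hornerC.
    under eq_bigr do rewrite expr0.
    by rewrite sumr_const card_ord /cstG /= mul1r.
  rewrite /Ssum /G.
  under eq_bigr do rewrite expr1.
  rewrite sum_cot // big_nat_recr //= big_nat1 dd_k0 mulr0 scale0r add0r.
  have -> : dd R 1 1 = 1.
    rewrite /dd expr1 /atan_trunc coef_poly /= /atan_coef /=.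
    by rewrite mul1r divr1 divr1.
  by rewrite mulr1 expr1 !hornerE.
split => // a sa.
have E1 := is_derive_S R n m.+1 a n0 (ltn0Sn m) sa.
have E2 : is_derive a 1 (Ssum R n m.+1)
    ((G R n m.+1)^`().[cot a] * - (1 + cot a ^+ 2)).
  have HH := is_derive_Gcot (G R n m.+1) a sa.
  have KK := near_eq_is_derive (g := Ssum R n m.+1) _ HH.
  apply: KK.
  apply: filterS (near_sin a sa) => y sy.
  by rewrite IH2.
have U := etrans (esym (@derive_val _ _ _ _ _ _ _ E1)) (@derive_val _ _ _ _ _ _ _ E2).
have Hr := G_rec R n m.+1 (ltn0Sn m).
have e : (m.+1).-1 = m by []. rewrite e in Hr U.
rewrite Hr; rewrite IH1 // in U.
move: U; generalize (G R n m) (G R n m.+1) => P0 P1 U.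
rewrite !hornerE.
have nr : (n%:R : R) != 0 by rewrite pnatr_eq0 -lt0n.
have mr : (m.+1%:R : R) != 0 by rewrite pnatr_eq0.
move: U; set s := Ssum R n m.+2 a; set c := cot a; set g := P1^`().[c]; set g0 := P0.[c] => U.
have H : g0 + s = n%:R / m.+1%:R * ((1 + c ^+ 2) * g).
  have k0 : - (m.+1%:R / n%:R) != 0 :> R by rewrite oppr_eq0 mulf_neq0 ?invr_eq0.
  apply: (mulfI k0); rewrite U; field.
  by rewrite nr andbT addrC natr1 pnatr_eq0.
rewrite [RHS](_ : _ = - g0 + (g0 + s)); first by rewrite addKr.
by rewrite H mulrA.
Qed.

End PartD.


Lemma sin_neq0_of (R : realType) (a : R) :
  (forall z : int, a != z%:~R * pi) -> sin a != 0.
Proof.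
move=> h; apply/negP => /eqP sa.
set z := Num.Def.floor (a / pi).
have pi0 : (0 : R) < pi := pi_gt0 R.
have h1 : z%:~R * pi <= a.
  by rewrite -ler_pdivlMr // floor_le.
have h2 : a < z%:~R * pi + pi.
  have := lt_succ_floor (a / pi); rewrite -/z ltr_pdivrMr // intrD mulrDl mul1r.
  by [].
set b := a - z%:~R * pi.
have sb : sin b = 0.
  case: z {h1 h2} @b => k /=.
    have := sa; rewrite -[a in sin a](subrK (k%:R * pi)) sin_addnpi.
    by move=> /eqP; rewrite mulf_eq0 signr_eq0 /= => /eqP.
  have e : a - (Negz k)%:~R * pi = a + k.+1%:R * pi.
    by rewrite NegzE intrN mulNr opprK.
  by rewrite e sin_addnpi sa mulr0.
have b0 : 0 <= b by rewrite /b; lra.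
have bpi : b < pi by rewrite /b; lra.
move: (h z); rewrite -subr_eq0 -/b.
case: (ltrP 0 b) => hb.
  have := @sin_gt0_pi R b; rewrite hb bpi => /(_ isT).
  by rewrite sb ltxx.
have -> : b = 0 by apply/le_anti; rewrite hb b0.
by rewrite eqxx.
Qed.

Theorem corollary6p3 (R : realType) (m n : nat) (alpha : R) :
  (1 <= m)%N -> (2 <= n)%N ->
  (forall z : int, alpha != z%:~R * pi) ->
  \sum_(k < n) cot ((alpha + k%:R * pi) / n%:R) ^+ m =
    (if ~~ odd m then (-1) ^+ m./2 * n%:R else 0)
    + (m.-1)`!%:R^-1 *
      \sum_(1 <= k < m.+1) n%:R ^+ k * arctan_number R m k
                            * (derivP R k.-1).[cot alpha].
Proof.
move=> m1 n2 ha.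
have sa := sin_neq0_of _ _ ha.
have n0 : (0 < n)%N by lia.
have := (main_ind R n n0 m).1 alpha sa.
rewrite /Ssum /th => ->.
rewrite /G hornerD hornerC horner_sum big_ltn // hornerZ dd_k0 mulr0 mul0r add0r.
congr (_ + _); rewrite mulr_sumr; apply: eq_bigr => k _.
rewrite hornerZ /dd /arctan_number.
case: m m1 => [//|m] _ /=.
rewrite factS natrM.
have f0 : (m`!%:R : R) != 0 by rewrite pnatr_eq0 -lt0n fact_gt0.
have k0 : (k`!%:R : R) != 0 by rewrite pnatr_eq0 -lt0n fact_gt0.
field; by rewrite f0 k0.
Qed.
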